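(* Let $P=\Bbbk[x_1,x_2,x_3]$ with Poisson bracket $\{x_1,x_2\}=0$, $\{x_2,x_3\}=3x_1^2$, $\{x_3,x_1\}=0$. If $G$ is a nontrivial finite subgroup of $\mathrm{PAut}_{\mathrm{gr}}(P)$ generated by Poisson reflections, then the invariant subalgebra $P^G$ is not isomorphic to $P$ as Poisson algebras.
   Context: $\Bbbk$ is algebraically closed of characteristic $0$; $P$ has the standard grading. $\mathrm{PAut}_{\mathrm{gr}}(P)$ is the group of degree-preserving bijective algebra homomorphisms preserving the bracket. A Poisson reflection is a finite-order $\phi\in\mathrm{PAut}_{\mathrm{gr}}(P)$ such that $\phi|_{P_1}$ has eigenvalues $1,1,\xi$ with $\xi\neq1$ a primitive root of unity. $P^G=\{a\in P:\phi(a)=a\ \forall \phi\in G\}$ with the restricted bracket. *)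

(* Defs.v *)
From HB Require Import structures.
From mathcomp Require Import all_boot all_order all_algebra.
From mathcomp Require Import mpoly.
From Stdlib Require List.
Set Implicit Arguments. Unset Strict Implicit. Unset Printing Implicit Defensive.
Import GRing.Theory.
Local Open Scope ring_scope.

Section Defs.
Variable k : fieldType.

(* P = k[x_1,x_2,x_3]; the variables x_1,x_2,x_3 are 'X_0,'X_1,'X_2. *)
Definition P := {mpoly k[3]}.
Definition ix0 : 'I_3 := @Ordinal 3 0 isT.
Definition ix1 : 'I_3 := @Ordinal 3 1 isT.
Definition ix2 : 'I_3 := @Ordinal 3 2 isT.

(* The unique biderivation with {x1,x2}=0, {x2,x3}=3x1^2, {x3,x1}=0:
   {f,g} = 3 x1^2 (d_2 f d_3 g - d_3 f d_2 g). *)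
Definition pbr (f g : P) : P :=
  3%:R * 'X_ix0 ^+ 2 *
  (f^`M(ix1) * g^`M(ix2) - f^`M(ix2) * g^`M(ix1)).

Definition graded_paut (phi : P -> P) : Prop :=
  ((forall p q, phi (p + q) = phi p + phi q) /\ (forall p q, phi (p * q) = phi p * phi q) /\ phi 1 = 1 /\ (forall (c : k) p, phi (c *: p) = c *: phi p) /\ bijective phi /\ (forall (d : nat) (p : P), p \is d.-homog -> phi p \is d.-homog) /\ (forall p q, phi (pbr p q) = pbr (phi p) (phi q))).

Definition lin_mat (phi : P -> P) : 'M[k]_3 :=
  \matrix_(i < 3, j < 3) (phi 'X_i)@_(U_(j)%MM).

Definition poisson_reflection (phi : P -> P) : Prop :=
  (graded_paut phi /\ (exists n : nat, (0 < n)%N /\ forall p, iter n phi p = p) /\ exists xi : k, (xi != 1 /\ (exists m : nat, m.-primitive_root xi) /\ char_poly (lin_mat phi) = ('X - 1) ^+ 2 * ('X - xi%:P))).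

(* G, a set of maps P -> P (up to pointwise equality), is a finite
   subgroup of PAut_gr(P). *)
Definition finite_subgroup (G : (P -> P) -> Prop) : Prop :=
  ((forall f g, G f -> f =1 g -> G g) /\ (exists s : seq (P -> P),
         forall g, G g <-> exists2 h, List.In h s & g =1 h) /\ (forall g, G g -> graded_paut g) /\ G id /\ (forall f g, G f -> G g -> G (f \o g)) /\ (forall f, G f -> exists g, G g /\ (g \o f) =1 id)).

Definition generated_by_reflections (G : (P -> P) -> Prop) : Prop :=
  forall g, G g -> exists rs : seq (P -> P),
    (forall r, List.In r rs -> G r /\ poisson_reflection r) /\
    g =1 foldr (fun r acc => r \o acc) id rs.

Definition nontrivial (G : (P -> P) -> Prop) : Prop :=
  exists g, G g /\ ~ (g =1 id).

Definition invariant (G : (P -> P) -> Prop) (a : P) : Prop :=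
  forall g, G g -> g a = a.

Definition poisson_iso_to_invariants (G : (P -> P) -> Prop) : Prop :=
  exists psi : P -> P,
    ((forall p q, psi (p + q) = psi p + psi q) /\ (forall p q, psi (p * q) = psi p * psi q) /\ psi 1 = 1 /\ (forall (c : k) p, psi (c *: p) = c *: psi p) /\ injective psi /\ (forall a, (exists b, psi b = a) <-> invariant G a) /\ (forall p q, psi (pbr p q) = pbr (psi p) (psi q))).
End Defs.

(* Main.v *)
Require Import Defs.
From HB Require Import structures.
From mathcomp Require Import all_boot all_order all_algebra.
From mathcomp Require Import mpoly.
From mathcomp Require Import ring zify.
From Stdlib Require List.
Set Implicit Arguments. Unset Strict Implicit. Unset Printing Implicit Defensive.
Import GRing.Theory.
Local Open Scope ring_scope.

Lemma det2 (R : comRingType) (A : 'M[R]_2) :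
  \det A = A 0 0 * A 1 1 - A 0 1 * A 1 0.
Proof.
rewrite (expand_det_row _ 0) !big_ord_recl big_ord0 addr0 /cofactor !det_mx11 !mxE /=.
rewrite expr0 expr1 mul1r mulN1r.
pose g (i j : nat) := A (inord i) (inord j).
have hA : forall i j : 'I_2, A i j = g i j by move=> i j; rewrite /g !inord_val.
rewrite !hA /= /bump /=.
by rewrite mulrN.
Qed.

Lemma det3 (R : comRingType) (A : 'M[R]_3) : A ix0 ix1 = 0 -> A ix0 ix2 = 0 ->
  \det A = A ix0 ix0 * (A ix1 ix1 * A ix2 ix2 - A ix1 ix2 * A ix2 ix1).
Proof.
move=> h1 h2.
rewrite (expand_det_row _ ix0) !big_ord_recl big_ord0 addr0.
pose g (i j : nat) := A (inord i) (inord j).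
have hA : forall i j : 'I_3, A i j = g i j by move=> i j; rewrite /g !inord_val.
have e1 : g 0 1 = 0 by rewrite -h1 hA.
have e2 : g 0 2 = 0 by rewrite -h2 hA.
rewrite /cofactor det2 !mxE !hA /= /bump /= e1 e2 !mul0r !addr0 expr0 mul1r.
done.
Qed.

Lemma cp3 (R : comRingType) (M : 'M[R]_3) : M ix0 ix1 = 0 -> M ix0 ix2 = 0 ->
  char_poly M = ('X - (M ix0 ix0)%:P) *
     (('X - (M ix1 ix1)%:P) * ('X - (M ix2 ix2)%:P) - (M ix1 ix2)%:P * (M ix2 ix1)%:P).
Proof.
move=> h1 h2; rewrite /char_poly det3; last 2 first.
- by rewrite !mxE h1 /= subr0.
- by rewrite !mxE h2 /= subr0.
rewrite !mxE /= !mulr1n !mulr0n !sub0r.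
by rewrite mulrNN.
Qed.
Definition subm (R : ringType) (A : 'M[R]_3) : 'M[R]_2 :=
  \matrix_(i, j) A (lift ord0 i) (lift ord0 j).

Lemma subm_mul (R : ringType) (A M : 'M[R]_3) : (forall j, M ord0 (lift ord0 j) = 0) ->
  subm (A * M) = subm A * subm M.
Proof.
move=> h; apply/matrixP => i j; rewrite !mxE big_ord_recl h mulr0 add0r.
by apply: eq_bigr => l _; rewrite !mxE.
Qed.

Lemma subm1 (R : ringType) : subm (1 : 'M[R]_3) = 1.
Proof.
by apply/matrixP => i j; rewrite !mxE (inj_eq (@lift_inj _ _)).
Qed.

Lemma subm_exp (R : ringType) (M : 'M[R]_3) n : (forall j, M ord0 (lift ord0 j) = 0) ->
  subm (M ^+ n) = (subm M) ^+ n.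
Proof.
move=> h; elim: n => [|n IH]; first by rewrite !expr0 subm1.
by rewrite !exprSr subm_mul // IH.
Qed.

Lemma nilp_exp (R : ringType) (N : R) : N * N = 0 -> forall m, (1 + N) ^+ m = 1 + N *+ m.
Proof.
move=> NN; elim=> [|m IH]; first by rewrite expr0 mulr0n addr0.
by rewrite exprSr IH mulrDl mul1r mulrDr mulr1 mulrnAl NN mul0rn addr0 mulrS addrA.
Qed.

Lemma refl_mat (F : fieldType) (hc : [pchar F] =i pred0) (M : 'M[F]_3) (xi : F) (n : nat) :
  M ix0 ix1 = 0 -> M ix0 ix2 = 0 ->
  M ix1 ix1 * M ix2 ix2 - M ix1 ix2 * M ix2 ix1 = M ix0 ix0 ^+ 2 ->
  (0 < n)%N -> M ^+ n = 1 -> xi != 1 -> xi != 0 ->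
  char_poly M = ('X - 1) ^+ 2 * ('X - xi%:P) ->
  [/\ M ix0 ix0 = -1, M ix1 ix1 = 1, M ix1 ix2 = 0, M ix2 ix1 = 0 & M ix2 ix2 = 1].
Proof.
move=> h1 h2 hD n0 hn xi1 xi0 hcp.
have E : forall x, (x - M ix0 ix0) * ((x - M ix1 ix1) * (x - M ix2 ix2) - M ix1 ix2 * M ix2 ix1)
    = (x - 1) ^+ 2 * (x - xi).
  move=> x; have := congr1 (horner^~ x) hcp; rewrite cp3 //.
  by rewrite !hornerE.
set a := M ix0 ix0 in hD E *; set p := M ix1 ix1 in hD E *; set q := M ix1 ix2 in hD E *.
set u := M ix2 ix1 in hD E *; set v := M ix2 ix2 in hD E *.
have two0 : (2%:R : F) != 0 by move/pcharf0P: hc => ->.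
move: (E a); rewrite subrr mul0r => /esym/eqP.
rewrite mulf_eq0 expf_eq0 /= !subr_eq0 => Ea.
move: (E 0); rewrite !sub0r mulrNN hD mulNr -exprS sqrrN expr1n mul1r => /oppr_inj E0.
have a1 : a != 1 by apply/contra: xi1 => /eqP a1; rewrite -E0 a1 expr1n.
have axi : a = xi by move: Ea; rewrite (negbTE a1) /= => /eqP.
have am1 : a = -1.
  have : a * (a ^+ 2 - 1) = 0 by rewrite mulrBr mulr1 -exprS E0 -axi subrr.
  have a0 : a != 0 by rewrite axi.
  move/eqP; rewrite mulf_eq0 (negbTE a0) /= subr_sqr_1 mulf_eq0 subr_eq0 (negbTE a1) /=.
  by rewrite addr_eq0 => /eqP.
have two1 : (1 + 1 : F) != 0 by exact: two0.
move: (E 1); rewrite subrr expr0n mul0r am1 opprK => /eqP.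
rewrite mulf_eq0 (negbTE two1) /= => /eqP E1.
have hD1 : p * v - q * u = 1 by rewrite hD am1 sqrrN expr1n.
have hqu : q * u = p * v - 1 by rewrite -hD1; ring.
have hv : v = 1 + 1 - p.
  have e : 1 + 1 - p - v = 0 by rewrite -E1 hqu; ring.
  by rewrite -[v]add0r -e; ring.
have hM0 : forall j, M ord0 (lift ord0 j) = 0.
  by case=> [[|[|//]] ?]; [rewrite -h1|rewrite -h2]; congr (M _ _); apply/val_inj.
pose g (i j : nat) := M (inord i) (inord j).
have hg : forall i j : 'I_3, M i j = g i j by move=> i j; rewrite /g !inord_val.
have Bn : (subm M) ^+ n = 1 by rewrite -subm_exp // hn subm1.
have gp : g 1%N 1%N = p by rewrite /p hg.
have gq : g 1%N 2%N = q by rewrite /q hg.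
have gu : g 2%N 1%N = u by rewrite /u hg.
have gv : g 2%N 2%N = v by rewrite /v hg.
set N := subm M - 1.
have NN : N * N = 0.
  apply/matrixP => i j; rewrite !mxE !big_ord_recl big_ord0 addr0 !mxE !hg.
  case: i => [[|[|//]] ?]; case: j => [[|[|//]] ?]; rewrite /= /bump /= ?addn0 ?addn1 ?gp ?gq ?gu ?gv ?subr0.
  - by rewrite hqu hv; ring.
  - by rewrite hv; ring.
  - by rewrite hv; ring.
  - by rewrite [u * q]mulrC hqu hv; ring.
have Nn := nilp_exp NN.
have N0 : N = 0.
  have : N *+ n = 0 by apply/(addrI 1); rewrite -Nn /N addrC subrK Bn addr0.
  move=> e; apply/matrixP => i j; move/matrixP: e => /(_ i j); rewrite -scaler_nat !mxE => /eqP.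
  rewrite mulf_eq0 => /orP [|/eqP ->//]. 
  by move/pcharf0P: hc => ->; rewrite eqn0Ngt n0.
have e : forall i j, subm M i j - (i == j)%:R = 0.
  by move=> i j; move/matrixP: N0 => /(_ i j); rewrite !mxE.
move: (e 0 0) (e 0 1) (e 1 0) (e 1 1); rewrite !mxE !hg /= /bump /= ?addn0 ?addn1 ?gp ?gq ?gu ?gv.
by rewrite !subr0 => /eqP; rewrite subr_eq0 => /eqP -> -> -> /eqP; rewrite subr_eq0 => /eqP ->.
Qed.


Section Poly.
Variable k : fieldType.
Hypothesis hc : [pchar k] =i pred0.
Local Notation PP := (P k).

Lemma homog1 (p : PP) : p \is 1.-homog -> p = \sum_(j < 3) p@_U_(j) *: 'X_j.
Proof.
move=> hp; apply/mpolyP => m.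
rewrite raddf_sum /=.
under eq_bigr do rewrite mcoeffZ.
have [/mdeg1P [i /eqP ->]|nd] := boolP (mdeg m == 1%N).
  rewrite (bigD1 i) //= mcoeffX eqxx mulr1 big1 ?addr0 // => j /negbTE nji.
  by rewrite mcoeffX eq_mnm1 nji mulr0.
rewrite (dhomog_nemf_coeff hp nd) big1 // => j _.
rewrite mcoeffX; case: eqP => [e|]; last by rewrite mulr0.
by move: nd; rewrite -e mdeg1.
Qed.

Lemma dX (i j : 'I_3) : ('X_i : PP)^`M(j) = (i == j)%:R.
Proof.
rewrite mderivX mnm1E; case: eqP => [->|_]; last by rewrite scale0r.
have -> : (U_(j) - U_(j) = 0)%MM by apply/mnmP => l; rewrite mnmBE subnn mnm0E.
by rewrite mpolyX0 scale1r.
Qed.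

Definition lin (a : 'I_3 -> k) : PP := \sum_(j < 3) a j *: 'X_j.

Lemma linE a : lin a = a ix0 *: 'X_ix0 + a ix1 *: 'X_ix1 + a ix2 *: 'X_ix2.
Proof.
rewrite /lin !big_ord_recl big_ord0 addr0 !addrA.
have e0 : ord0 = ix0 by apply/val_inj.
have e1 : lift ord0 ord0 = ix1 by apply/val_inj.
have e2 : lift ord0 (lift ord0 ord0) = ix2 by apply/val_inj.
by rewrite e2 e1 e0.
Qed.

Lemma dlin a i : (lin a)^`M(i) = (a i)%:MP.
Proof.
rewrite /lin raddf_sum /= (bigD1 i) //= mderivZ dX eqxx big1 ?addr0.
  by rewrite -alg_mpolyC.
by move=> j /negbTE nji; rewrite mderivZ dX nji scaler0.
Qed.

Lemma pbr_lin a b : pbr (lin a) (lin b) =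
  3%:R * 'X_ix0 ^+ 2 * (a ix1 * b ix2 - a ix2 * b ix1)%:MP.
Proof. by rewrite /pbr !dlin mpolyCB !mpolyCM. Qed.

Lemma X_neq0 (i : 'I_3) : ('X_i : PP) != 0.
Proof.
by apply/eqP => /(congr1 (mcoeff U_(i))); rewrite mcoeffXU eqxx mcoeff0 => /eqP; rewrite oner_eq0.
Qed.

Lemma nat_neq0 (n : nat) : (0 < n)%N -> (n%:R : PP) != 0.
Proof.
by move=> n0; rewrite -mpolyC_nat mpolyC_eq0; move/pcharf0P: hc => ->; rewrite eqn0Ngt n0.
Qed.

Lemma c3X_neq0 : (3%:R * 'X_ix0 ^+ 2 : PP) != 0.
Proof. by rewrite mulf_neq0 ?nat_neq0 // expf_neq0 // X_neq0. Qed.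

Lemma pbr_X0 (q : PP) : pbr 'X_ix0 q = 0.
Proof. by rewrite /pbr !dX /= !mul0r subrr mulr0. Qed.


Section Maps.
Variable f : PP -> PP.
Hypothesis fD : forall p q, f (p + q) = f p + f q.
Hypothesis fZ : forall (c : k) p, f (c *: p) = c *: f p.

Lemma f0 : f 0 = 0.
Proof. by have := fZ 0 0; rewrite !scale0r. Qed.

Lemma fsum (I : Type) (r : seq I) (F : I -> PP) : f (\sum_(j <- r) F j) = \sum_(j <- r) f (F j).
Proof. exact: (big_morph f fD f0). Qed.

Lemma f_lin a : f (lin a) = \sum_(j < 3) a j *: f 'X_j.
Proof. by rewrite /lin fsum; apply: eq_bigr => j _; rewrite fZ. Qed.

Lemma lin_mat_comp (h : PP -> PP) : (forall i, h 'X_i \is 1.-homog) ->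
  lin_mat (fun p => f (h p)) = lin_mat h * lin_mat f.
Proof.
move=> hh; apply/matrixP => i j; rewrite !mxE (homog1 (hh i)) -/(lin _) f_lin raddf_sum /=.
by apply: eq_bigr => l _; rewrite mcoeffZ !mxE.
Qed.
End Maps.

Lemma lin_mat_id : lin_mat (@id PP) = 1.
Proof. by apply/matrixP => i j; rewrite !mxE mcoeffXU. Qed.

Lemma fnat (f : PP -> PP) : (forall p q, f (p + q) = f p + f q) -> f 1 = 1 ->
  forall n, f n%:R = n%:R.
Proof.
move=> fD f1; elim=> [|n IH].
  change (f 0 = 0); have e := fD 0 0; rewrite addr0 in e.
  by apply/(addrI (f 0)); rewrite addr0 -e.
by rewrite mulrS fD f1 IH.
Qed.

End Poly.


Section Refl.
Variable k : fieldType.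
Hypothesis hc : [pchar k] =i pred0.
Local Notation PP := (P k).

Lemma refl_struct (r : PP -> PP) : poisson_reflection r ->
  exists b c : k, [/\ r 'X_ix0 = - 'X_ix0, r 'X_ix1 = 'X_ix1 + b *: 'X_ix0
                   & r 'X_ix2 = 'X_ix2 + c *: 'X_ix0].
Proof.
move=> [[rD [rM [r1 [rZ [rbij [rhom rbr]]]]]] [[n [n0 hn]] [xi [xi1 [[m prim] hcp]]]]].
set M := lin_mat r in hcp.
have hX1 : forall i, ('X_i : PP) \is 1.-homog.
  by move=> i; rewrite dhomogX; apply/eqP/mdeg1.
have hX : forall i, r 'X_i = lin (fun j => M i j).
  by move=> i; rewrite [LHS](homog1 (rhom _ _ (hX1 i))); apply: eq_bigr => j _; rewrite !mxE.
have r0 := f0 rZ.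
case: rbij => g gK Kg.
have cas : forall q, pbr (r 'X_ix0) (r q) = 0 by move=> q; rewrite -rbr pbr_X0 r0.
have M01 : M ix0 ix1 = 0.
  have := cas (g 'X_ix2); rewrite Kg hX /pbr !dlin !dX /= mulr1 mulr0 subr0.
  by move/eqP; rewrite mulf_eq0 (negbTE (c3X_neq0 hc)) mpolyC_eq0 => /eqP.
have M02 : M ix0 ix2 = 0.
  have := cas (g 'X_ix1); rewrite Kg hX /pbr !dlin !dX /= mulr1 mulr0 sub0r.
  by move/eqP; rewrite mulrN oppr_eq0 mulf_eq0 (negbTE (c3X_neq0 hc)) mpolyC_eq0 => /eqP.
have rX0 : r 'X_ix0 = M ix0 ix0 *: 'X_ix0.
  by rewrite hX linE M01 M02 !scale0r !addr0.
have hdet : M ix1 ix1 * M ix2 ix2 - M ix1 ix2 * M ix2 ix1 = M ix0 ix0 ^+ 2.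
  have e : pbr 'X_ix1 'X_ix2 = 3%:R * 'X_ix0 ^+ 2 :> PP.
    by rewrite /pbr !dX /= mulr1 mulr0 subr0 mulr1.
  have := rbr 'X_ix1 'X_ix2; rewrite e rM (fnat rD r1) expr2 rM -expr2 rX0 !hX pbr_lin exprZn.
  rewrite scalerAr -mul_mpolyC [RHS]mulrC.
  move=> e2; have : 3%:R * 'X_ix0 ^+ 2 * (M ix1 ix1 * M ix2 ix2 - M ix1 ix2 * M ix2 ix1)%:MP
     = 3%:R * 'X_ix0 ^+ 2 * (M ix0 ix0 ^+ 2)%:MP :> PP by rewrite mulrC -e2; ring.
  by move/(mulfI (c3X_neq0 hc))/eqP; rewrite mpolyC_eq => /eqP.
have hXh : forall j i, iter j r 'X_i \is 1.-homog.
  by elim=> [|j IH] i //=; apply: rhom.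
have Mn : forall j, lin_mat (iter j r) = M ^+ j.
  elim=> [|j IH].
    by rewrite expr0 -lin_mat_id; apply/matrixP => i l; rewrite !mxE.
  rewrite exprSr -IH -(lin_mat_comp rD rZ) //.
have hMn : M ^+ n = 1.
  by rewrite -Mn -lin_mat_id; apply/matrixP => i l; rewrite !mxE hn.
have xi0 : xi != 0.
  apply/eqP => x0; move: (prim_expr_order prim); rewrite x0 expr0n.
  by rewrite eqn0Ngt (prim_order_gt0 prim) /= => /eqP; rewrite eq_sym oner_eq0.
have [Ma Mp Mq Mu Mv] := refl_mat hc M01 M02 hdet n0 hMn xi1 xi0 hcp.
exists (M ix1 ix0), (M ix2 ix0); split.
- by rewrite rX0 Ma scaleN1r.
- by rewrite hX linE Mp Mq scale1r scale0r addr0 addrC.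
- by rewrite hX linE Mu Mv scale1r scale0r addr0 addrC.
Qed.
End Refl.


Lemma in_mapIn (T : Type) (U : eqType) (f : T -> U) s y :
  y \in map f s <-> exists2 x, List.In x s & y = f x.
Proof.
elim: s => [|x s IH] /=; first by split=> // [[]].
rewrite in_cons; split.
  case/orP => [/eqP ->|h]; first by exists x; [left|].
  by have [z hz ->] := IH.1 h; exists z; [right|].
case=> z [<-|hz] e; first by rewrite e eqxx.
by apply/orP; right; apply: IH.2; exists z.
Qed.

Section Grp.
Variable k : fieldType.
Hypothesis hc : [pchar k] =i pred0.
Local Notation PP := (P k).

Definition Sg (g : PP -> PP) := exists a b c : k, [/\ a != 0, g 'X_ix0 = a *: 'X_ix0,
   g 'X_ix1 = 'X_ix1 + b *: 'X_ix0 & g 'X_ix2 = 'X_ix2 + c *: 'X_ix0].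

Lemma S_comp (f h : PP -> PP) : (forall p q, f (p + q) = f p + f q) ->
  (forall (c : k) p, f (c *: p) = c *: f p) -> Sg f -> Sg h -> Sg (f \o h).
Proof.
move=> fD fZ [a [b [c [a0 f0 f1 f2]]]] [a' [b' [c' [a0' h0 h1 h2]]]].
exists (a * a'), (b + b' * a), (c + c' * a); split => /=.
- by rewrite mulf_neq0.
- by rewrite h0 fZ f0 scalerA mulrC.
- by rewrite h1 fD fZ f1 f0 scalerA -addrA scalerDl.
- by rewrite h2 fD fZ f2 f0 scalerA -addrA scalerDl.
Qed.

Lemma S_id : Sg id.
Proof. by exists 1, 0, 0; rewrite oner_eq0 scale1r !scale0r !addr0. Qed.

Lemma S_refl r : poisson_reflection r -> Sg r.
Proof.
move=> hr; have [b [c [r0 r1 r2]]] := refl_struct hc hr.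
exists (-1), b, c; split => //; last by rewrite scaleN1r.
by rewrite oppr_eq0 oner_eq0.
Qed.

Lemma S_ext f g : f =1 g -> Sg f -> Sg g.
Proof. by move=> e [a [b [c [a0 h0 h1 h2]]]]; exists a, b, c; rewrite -!e. Qed.

Lemma S_G (G : (PP -> PP) -> Prop) : finite_subgroup G -> generated_by_reflections G ->
  forall g, G g -> Sg g.
Proof.
move=> _ gen g Gg; have [rs [hrs eg]] := gen g Gg.
apply: S_ext (fun x => esym (eg x)) _.
elim: rs hrs {eg} => [|r rs IH] hrs /=; first exact: S_id.
have [_ hr] := hrs r (or_introl erefl).
have [[rD [_ [_ [rZ _]]]] _] := hr.
apply: S_comp rD rZ (S_refl hr) (IH _) => q hq; apply: hrs; right; exact: hq.
Qed.


Lemma sum_const_seq (T : Type) (b : k) (O : seq T) : \sum_(x <- O) b = b *+ size O.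
Proof. by elim: O => [|x O IH]; rewrite ?big_nil ?big_cons ?IH ?mulrS. Qed.

Lemma fixpt (G : (PP -> PP) -> Prop) (j : 'I_3) : j != ix0 -> finite_subgroup G ->
  (forall g, G g -> exists a b : k, [/\ a != 0, g 'X_ix0 = a *: 'X_ix0 & g 'X_j = 'X_j + b *: 'X_ix0]) ->
  exists t : k, forall g, G g -> g ('X_j + t *: 'X_ix0) = 'X_j + t *: 'X_ix0.
Proof.
move=> j0 [Gext [[s hs] [Gpa [Gid [Gcomp _]]]]] hS.
pose cb (h : PP -> PP) := (h 'X_j)@_U_(ix0).
have cbE : forall h b, h 'X_j = 'X_j + b *: 'X_ix0 -> cb h = b.
  move=> h b e; rewrite /cb e mcoeffD mcoeffZ !mcoeffXU eqxx (negbTE j0).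
  by rewrite mulr1 add0r.
have memG : forall h, List.In h s -> G h by move=> h hh; apply/hs; exists h.
pose O := undup (map cb s).
have stab : forall g, G g -> forall a b, g 'X_ix0 = a *: 'X_ix0 -> g 'X_j = 'X_j + b *: 'X_ix0 ->
    forall x, x \in O -> a * x + b \in O.
  move=> g Gg a b g0 gj x; rewrite mem_undup => /in_mapIn [h hh ->].
  have [a' [b' [_ h0 hj]]] := hS h (memG h hh).
  have [h' hh' e] := (hs _).1 (Gcomp _ _ Gg (memG h hh)).
  have [gD [_ [_ [gZ _]]]] := Gpa g Gg.
  rewrite mem_undup; apply/in_mapIn; exists h' => //.
  rewrite (cbE _ _ hj) /cb -e /= hj gD gZ g0 gj !mcoeffD !mcoeffZ !mcoeffXU eqxx (negbTE j0).
  by rewrite /=; ring.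
have [h0 hh0] : exists h0, List.In h0 s by have [h0 hh0 _] := (hs id).1 Gid; exists h0.
have xO : cb h0 \in O by rewrite mem_undup; apply/in_mapIn; exists h0.
have Npos : (size O != 0)%N by rewrite size_eq0; apply/eqP => e; rewrite e in xO.
have N0 : (size O)%:R != 0 :> k by move/pcharf0P: hc => ->.
exists ((\sum_(x <- O) x) / (size O)%:R) => g Gg.
have [a [b [a0 g0 gj]]] := hS g Gg.
have [gD [_ [_ [gZ _]]]] := Gpa g Gg.
have phiI : injective (fun x => a * x + b) by move=> x y /addIr /(mulfI a0).
have U1 : uniq (map (fun x => a * x + b) O) by rewrite (map_inj_uniq phiI) undup_uniq.
have sub : {subset map (fun x => a * x + b) O <= O}.
  by move=> y /mapP [x xin ->]; apply: (stab g Gg).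
have [_ eqO] := uniq_min_size U1 sub (eq_leq (esym (size_map _ _))).
have pe := uniq_perm U1 (undup_uniq _) eqO.
have hsum : \sum_(x <- map (fun x => a * x + b) O) x = \sum_(x <- O) x := perm_big _ pe.
rewrite big_map big_split /= -mulr_sumr sum_const_seq -mulr_natr in hsum.
rewrite gD gZ g0 gj scalerA -addrA -scalerDl; congr (_ + _ *: _).
move: hsum; set S := \sum_(i <- O) i => hsum.
apply/eqP; rewrite -subr_eq0.
have -> : b + S / (size O)%:R * a - S / (size O)%:R = (a * S + b * (size O)%:R - S) / (size O)%:R.
  by field.
by rewrite hsum subrr mul0r.
Qed.

End Grp.


Lemma sqrt_closed (k : closedFieldType) (z : k) : exists mu : k, mu ^+ 2 = z.
Proof.
have [mu hmu] := @solve_monicpoly k 2 (nth 0 [:: z]) isT.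
by exists mu; rewrite hmu !big_ord_recl big_ord0 /= expr0 mulr1 mul0r !addr0.
Qed.

Lemma arith (a b : nat) : ((a + a).-1 + b).-1 = 3%N -> a != 0%N -> b != 0%N -> a = 1%N \/ b = 1%N.
Proof. rewrite -!subn1; lia. Qed.

Theorem lemma3p1p2 (k : closedFieldType) (hchar : [pchar k] =i pred0)
  (G : (P k -> P k) -> Prop) :
  finite_subgroup G -> generated_by_reflections G -> nontrivial G ->
  ~ poisson_iso_to_invariants G.
Proof.
move=> fin gen [g0 [Gg0 ng0]] [psi [pD [pM [p1 [pZ [pinj [pim pbrp]]]]]]].
have SG := S_G hchar fin gen.
have pM' : forall p q : P k, psi (p * q) = psi p * psi q := pM.
have [r [Gr [b [c [r0 _ _]]]]] : exists r, G r /\ exists b c : k, [/\ r 'X_ix0 = - 'X_ix0,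
     r 'X_ix1 = 'X_ix1 + b *: 'X_ix0 & r 'X_ix2 = 'X_ix2 + c *: 'X_ix0].
  have [rs [hrs eg]] := gen g0 Gg0.
  case: rs hrs eg => [|r rs] hrs eg; first by exfalso; apply: ng0 => x; rewrite eg.
  have [Gr hr] := hrs r (or_introl erefl).
  by exists r; split => //; apply: refl_struct.
have [t2 ht2] : exists t : k, forall g, G g ->
    g ('X_ix1 + t *: 'X_ix0) = 'X_ix1 + t *: 'X_ix0.
  apply: (fixpt hchar) => // g Gg.
  by have [a [b' [c' [a0 h0 h1 h2]]]] := SG g Gg; exists a, b'.
have [t3 ht3] : exists t : k, forall g, G g ->
    g ('X_ix2 + t *: 'X_ix0) = 'X_ix2 + t *: 'X_ix0.
  apply: (fixpt hchar) => // g Gg.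
  by have [a [b' [c' [a0 h0 h1 h2]]]] := SG g Gg; exists a, c'.
set l2 : P k := 'X_ix1 + t2 *: 'X_ix0.
set l3 : P k := 'X_ix2 + t3 *: 'X_ix0.
have hl : pbr l2 l3 = 3%:R * 'X_ix0 ^+ 2.
  by rewrite /pbr /l2 /l3 !mderivD !mderivZ !dX /= !scaler0 !addr0 mulr1 mulr0 subr0 mulr1.
have [a ha] := (pim l2).2 ht2.
have [b' hb] := (pim l3).2 ht3.
set y := psi 'X_ix0.
have psi3 : psi 3%:R = 3%:R := fnat pD p1 3.
have e : 'X_ix0 ^+ 2 = y ^+ 2 * psi (a^`M(ix1) * b'^`M(ix2) - a^`M(ix2) * b'^`M(ix1)).
  apply: (mulfI (nat_neq0 hchar (isT : (0 < 3)%N))).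
  have pX2 : forall x : P k, psi (x ^+ 2) = psi x ^+ 2 by move=> x; rewrite !expr2 pM'.
  rewrite -hl -ha -hb -pbrp /pbr !pM' psi3 -/y; ring.
set w := psi _ in e.
have X2nz : ('X_ix0 ^+ 2 : P k) != 0 by rewrite expf_neq0 // X_neq0.
have ynz : y != 0 by apply: contra X2nz => /eqP y0; rewrite e y0 expr0n mul0r.
have wnz : w != 0 by apply: contra X2nz => /eqP w0; rewrite e w0 mulr0.
have hs : msize ('X_ix0 ^+ 2 : P k) = 3%N by rewrite expr2 msizeM ?X_neq0 // msizeX mdeg1.
rewrite e !expr2 !msizeM ?mulf_neq0 // in hs.
have sy : msize y != 0%N by rewrite mmeasure_poly_eq0.
have sw : msize w != 0%N by rewrite mmeasure_poly_eq0.
have [y1|w1] : msize y = 1%N \/ msize w = 1%N.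
  exact: (arith hs sy sw).
have pC : forall c0 : k, psi c0%:MP = c0%:MP by move=> c0; rewrite -alg_mpolyC pZ p1.
  have /msize_poly1P [cy cy0 ey] : msize y == 1%N by apply/eqP.
  have : psi ('X_ix0 * (cy^-1)%:MP) = psi 1.
    by rewrite pM' pC -/y ey -mpolyCM mulfV // mpolyC1 p1.
  move/pinj/(congr1 (mcoeff 0%MM)); rewrite mulrC mcoeffCM mcoeffX mcoeff1 mnm1_eq0 eqxx /=.
  by rewrite mulr0 => /eqP; rewrite eq_sym oner_eq0.
have /msize_poly1P [cw cw0 ew] : msize w == 1%N by apply/eqP.
have [mu hmu] := sqrt_closed (cw^-1).
have hr : (y - mu *: 'X_ix0) * (y + mu *: 'X_ix0) = 0.
  rewrite -subr_sqr exprZn hmu e ew -mul_mpolyC mulrCA -mpolyCM mulVf // mpolyC1 mulr1 subrr.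
  done.
have [l el] : exists l : k, y = l *: 'X_ix0.
  move/eqP: hr; rewrite mulf_eq0 subr_eq0 addr_eq0.
  by case/orP => /eqP ->; [exists mu | exists (-mu); rewrite scaleNr].
have yinv : r y = y := (pim y).1 (ex_intro _ 'X_ix0 erefl) r Gr.
have [_ [_ [Gpa _]]] := fin.
have [_ [_ [_ [rZ _]]]] := Gpa r Gr.
rewrite {1}el rZ r0 scalerN -el in yinv; move/eqP: yinv.
rewrite eq_sym -addr_eq0 -mulr2n -mulr_natr mulf_eq0 (negbTE ynz) /=.
by rewrite (negbTE (nat_neq0 hchar (isT : (0 < 2)%N))).
Qed.
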